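(* Let $q=r^2$ with $r$ an odd prime power, $\theta$ a primitive element of $\mathbb{F}_q$, and $q-1=e_1f_1=e_2f_2$ with positive integers, where for some integer $l\geq 2$ we have $e_1\equiv 2^l\pmod{2^{l+1}}$ and $2^l\mid e_2$, and moreover $2e_2\mid e_1(r+1)$ and $e_1\mid e_2(r-1)$. Let $A=\langle\theta^{e_1}\rangle$, $B=\langle\theta^{e_2}\rangle$, $\beta=\theta^{e_2}$, $\gamma=\theta^{e_1/2}$, $D_1=\frac{e_1}{\gcd(e_1,e_2)}$, $D_2=\frac{e_2}{\gcd(e_1,e_2)}$. Let $1\leq s\leq D_1$, $1\leq t\leq D_2$, let $i_1,\dots,i_s$ be integers pairwise distinct modulo $D_1$ and $j_1,\dots,j_t$ integers pairwise distinct modulo $D_2$, and set $M=\bigcup_{\mu=1}^s\beta^{i_\mu}A$, $N=\bigcup_{\nu=1}^t\gamma^{2j_\nu+1}B$, $S=M\cup N$. Then $\eta(L_S(b))=(-1)^{\frac{te_1(r+1)}{2e_2}+\frac{t(r+1)}{2}}$ for every $b\in M$, and $\eta(L_S(b))=(-1)^{\frac{(t-1)(r+1)}{2}}$ for every $b\in N$.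
   Context: $\eta$ denotes the quadratic character of $\mathbb{F}_q^*$ ($\eta(x)=1$ if $x$ is a nonzero square, $-1$ otherwise). For a finite set $S\subseteq\mathbb{F}_q$ and $b\in S$, $L_S(b)=\prod_{c\in S,\,c\neq b}(b-c)$. $\langle x\rangle$ denotes the cyclic subgroup of $\mathbb{F}_q^*$ generated by $x$. *)

(* Defs.v *)
From HB Require Import structures.
From mathcomp Require Import all_boot all_order all_algebra all_field.
Set Implicit Arguments. Unset Strict Implicit. Unset Printing Implicit Defensive.
Import GRing.Theory Num.Theory.
Local Open Scope ring_scope.

Definition qchar (F : finFieldType) (x : F) : int :=
  if x == 0 then 0 else if [exists y : F, y ^+ 2 == x] then 1 else -1.

(* cyclic subgroup <x> of F^*, for x <> 0 : all powers x^k (period divides q-1) *)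
Definition cyc (F : finFieldType) (x : F) : {set F} :=
  [set x ^+ (nat_of_ord k) | k : 'I_#|F|].

Definition LS (F : finFieldType) (S : {set F}) (b : F) : F :=
  \prod_(c in S | c != b) (b - c).

Definition coset_mul (F : finFieldType) (c : F) (H : {set F}) : {set F} :=
  [set c * h | h in H].

(* Main.v *)
Require Import Defs.
From HB Require Import structures.
From mathcomp Require Import all_boot all_order all_algebra all_field.
From mathcomp Require Import zify ring.
Import GRing.Theory Num.Theory.
Local Open Scope ring_scope.
Set Implicit Arguments. Unset Strict Implicit.

Lemma frob_nat (F : finFieldType) (p k : nat) : prime p -> #|F| = ((p ^ k) ^ 2)%N ->
  [pchar F].-nat (p ^ k)%N.
Proof.
move=> pp cF.
have ch : p \in [pchar F] by apply: (@card_finPcharP F p (k * 2)); rewrite // expnM.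
rewrite pnatX; apply/orP; left.
by rewrite (eq_pnat _ (pcharf_eq ch)) pnat_id.
Qed.

Lemma frobD (F : finFieldType) (r : nat) : [pchar F].-nat r ->
  forall x y : F, (x + y) ^+ r = x ^+ r + y ^+ r.
Proof. by move=> h x y; rewrite exprDn_pchar. Qed.

Lemma frobB (F : finFieldType) (r : nat) : [pchar F].-nat r ->
  forall x y : F, (x - y) ^+ r = x ^+ r - y ^+ r.
Proof. by move=> h x y; rewrite exprDn_pchar // exprNn_pchar. Qed.

Lemma frobn (F : finFieldType) (r : nat) : [pchar F].-nat r ->
  forall m : nat, (m%:R : F) ^+ r = m%:R.
Proof.
move=> h; elim=> [|m IH]; first by rewrite expr0n; case: r h => // _; rewrite /=.
by rewrite -addn1 natrD frobD // IH expr1n.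
Qed.
Lemma th_half (F : fieldType) (th : F) (n : nat) :
  n.-primitive_root th -> ~~ odd n -> th ^+ (n./2) = -1.
Proof.
move=> pr ev.
have n0 := prim_order_gt0 pr.
have hn : n = (n./2 + n./2)%N by move: (odd_double_half n); rewrite (negPf ev) add0n -addnn.
have: (th ^+ (n./2)) ^+ 2 == 1 by rewrite -exprM mulnC mul2n -addnn -hn prim_expr_order.
rewrite sqrf_eq1 => /orP[/eqP h1|/eqP //].
have : (n %| n./2)%N by rewrite (prim_order_dvd pr) h1.
move=> /dvdn_leq; lia.
Qed.

Lemma qchar_sign (F : finFieldType) (th : F) (x : F) (E : nat) :
  (#|F|.-1).-primitive_root th -> ~~ odd (#|F|.-1) -> x != 0 ->
  x ^+ ((#|F|.-1)./2) = (-1) ^+ E -> qchar x = (-1) ^+ E.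
Proof.
set n := #|F|.-1 => pr ev x0 hx.
have n0 := prim_order_gt0 pr.
have hn : n = (n./2 + n./2)%N by move: (odd_double_half n); rewrite (negPf ev) add0n -addnn.
have hh := th_half pr ev.
have m1 : (-1 : F) != 1.
  apply/negP => /eqP h; move: (prim_order_dvd pr (n./2)); rewrite hh h eqxx.
  move=> /dvdn_leq; lia.
have cF : #|F| = n.+1 by rewrite /n prednK //; apply/card_gt0P; exists 0.
have xn : x ^+ n = 1.
  apply: (mulIf x0); rewrite mul1r -exprSr -cF; exact: expf_card.
have [i xi] := prim_rootP pr xn.
have hi : (-1) ^+ i = (-1) ^+ E :> F by rewrite -hx xi exprAC hh.
have oi : odd i = odd E.
  move: hi; rewrite -signr_odd -(signr_odd _ E).
  by case: (odd i); case: (odd E) => //= /eqP; rewrite expr0 expr1 ?(negPf m1) // eq_sym (negPf m1).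
rewrite /qchar (negPf x0); case: ifP => [/existsP[y /eqP yx]|nex].
  have y0 : y != 0 by apply: contraNneq x0 => y0; rewrite -yx y0 expr0n.
  have : (-1) ^+ E = 1 :> F.
    rewrite -hx -yx -exprM mul2n -addnn -hn.
    apply: (mulIf y0); rewrite mul1r -exprSr -cF; exact: expf_card.
  move=> h; rewrite -signr_odd; move: h; rewrite -signr_odd.
  by case: (odd E) => //=; rewrite !expr1 => /eqP; rewrite (negPf m1).
case oE: (odd E); last first.
  suff : [exists y : F, y ^+ 2 == x] by rewrite nex.
  apply/existsP; exists (th ^+ i./2).
  rewrite -exprM mulnC mul2n xi; move: (odd_double_half i); rewrite oi oE add0n => ->.
  by [].
by rewrite -signr_odd oE.
Qed.
Lemma half_id (r : nat) : odd r -> ((r ^ 2).-1./2 = r.-1 * (r.+1)./2)%N.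
Proof.
move=> or; move: (odd_double_half r); rewrite or; set s := r./2 => hr0.
have hr : s.*2.+1 = r by rewrite -hr0.
have e1 : (r.+1)./2 = s.+1 by rewrite -hr -[s.*2.+2]/((s.+1).*2) doubleK.
have e2 : ((r ^ 2).-1 = (r.-1 * (r.+1)./2).*2)%N.
  rewrite e1 -hr -!mul2n; nia.
by rewrite e2 doubleK.
Qed.

Lemma fr_sq (F : finFieldType) (r : nat) (z : F) : odd r -> z != 0 -> z ^+ r = z ->
  z ^+ ((r ^ 2).-1./2) = 1.
Proof.
move=> or z0 zr.
have r0 : (0 < r)%N by case: r or {zr}.
have zr1 : z ^+ r.-1 = 1 by apply: (mulIf z0); rewrite mul1r -exprSr prednK.
by rewrite half_id // exprM zr1 expr1n.
Qed.

Lemma circ (F : finFieldType) (r : nat) (u w : F) : odd r -> [pchar F].-nat r ->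
  u ^+ r.+1 = 1 -> w ^+ r.+1 = 1 -> u != w ->
  (u - w) ^+ ((r ^ 2).-1./2) * (u * w) ^+ ((r.+1)./2) = (-1) ^+ ((r.+1)./2).
Proof.
move=> or pr ur wr uw.
have r0 : (0 < r)%N by case: r or {ur wr pr}.
have u0 : u != 0 by apply: contra_eq_neq ur => ->; rewrite expr0n eq_sym oner_neq0.
have w0 : w != 0 by apply: contra_eq_neq wr => ->; rewrite expr0n eq_sym oner_neq0.
set x := u - w.
have x0 : x != 0 by rewrite subr_eq0.
have ur' : u ^+ r = u^-1 by apply: (mulIf u0); rewrite -exprSr ur mulVf.
have wr' : w ^+ r = w^-1 by apply: (mulIf w0); rewrite -exprSr wr mulVf.
have xr : x ^+ r * (u * w) = - x.
  by rewrite frobB // ur' wr' /x mulrBl mulrA mulVf // mul1r mulrCA mulVf // mulr1 opprB.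
have key : x ^+ r.-1 * (u * w) = -1.
  apply: (mulIf x0); rewrite mulN1r -xr -{2}(prednK r0) exprSr; ring.
by rewrite half_id // exprM -exprMn key.
Qed.
Lemma poly_coset (F : fieldType) (m : nat) (z c : F) : m.-primitive_root z -> c != 0 ->
  \prod_(i < m) ('X - (c * z ^+ i)%:P) = 'X^m - (c ^+ m)%:P.
Proof.
move=> pz c0; have m0 := prim_order_gt0 pz.
pose rs := [seq c * z ^+ i | i <- iota 0 m].
have -> : \prod_(i < m) ('X - (c * z ^+ i)%:P) = \prod_(w <- rs) ('X - w%:P).
  by rewrite big_map -(big_mkord xpredT (fun i => 'X - (c * z ^+ i)%:P)) /index_iota subn0.
rewrite {1}(@all_roots_prod_XsubC _ ('X^m - (c ^+ m)%:P) rs).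
- by rewrite (monicP (monicXnsubC _ m0)) scale1r.
- by rewrite size_XnsubC // size_map size_iota.
- apply/allP=> _ /mapP[i _ ->] /=; rewrite rootE !hornerE.
  by rewrite exprMn exprAC (prim_expr_order pz) expr1n mulr1 subrr.
rewrite uniq_rootsE map_inj_in_uniq ?iota_uniq // => i j.
rewrite !mem_iota !add0n => /andP[_ ltim] /andP[_ ltjm] /(mulfI c0) /eqP.
by rewrite (eq_prim_root_expr pz) !modn_small // => /eqP.
Qed.

Lemma prod_coset (F : fieldType) (m : nat) (z c b : F) : m.-primitive_root z -> c != 0 ->
  \prod_(i < m) (b - c * z ^+ i) = b ^+ m - c ^+ m.
Proof.
move=> pz c0; move: (congr1 (horner^~ b) (poly_coset pz c0)).
rewrite horner_prod; under eq_bigr do rewrite hornerXsubC.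
by move=> ->; rewrite !hornerE.
Qed.

Lemma prod_coset_own (F : fieldType) (m : nat) (z c : F) (k : 'I_m) :
  m.-primitive_root z -> c != 0 ->
  \prod_(i < m | i != k) (c * z ^+ k - c * z ^+ i) = m%:R * (c * z ^+ k) ^+ m.-1.
Proof.
move=> pz c0; have m0 := prim_order_gt0 pz.
set b := c * z ^+ k.
pose Q := \prod_(i < m | i != k) ('X - (c * z ^+ i)%:P).
have e1 : ('X - b%:P) * Q = 'X^m - (b ^+ m)%:P.
  have -> : b ^+ m = c ^+ m by rewrite /b exprMn exprAC (prim_expr_order pz) expr1n mulr1.
  by rewrite -(poly_coset pz c0) (bigD1 k).
have e2 : Q = \sum_(i < m) 'X ^+ (m.-1 - i) * b%:P ^+ i.
  apply: (mulfI (negbT (polyXsubC_eq0 b))); by rewrite e1 -subrXX rmorphXn.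
have e3 : Q.[b] = \prod_(i < m | i != k) (b - c * z ^+ i).
  by rewrite /Q horner_prod; apply: eq_bigr => i _; rewrite hornerXsubC.
rewrite -e3 e2 horner_sum.
rewrite (eq_bigr (fun _ => b ^+ m.-1)); last first.
  by move=> i _; rewrite hornerM hornerXn horner_exp hornerC -exprD subnK // -ltnS prednK.
by rewrite sumr_const card_ord mulr_natl.
Qed.

Lemma coset_eq (F : finFieldType) (m : nat) (z c : F) : m.-primitive_root z -> (m <= #|F|)%N ->
  coset_mul c (cyc z) = [set c * z ^+ (nat_of_ord i) | i : 'I_m].
Proof.
move=> pz le; have m0 := prim_order_gt0 pz.
apply/setP => x; apply/imsetP/imsetP.
  move=> [y /imsetP[k _ ->] ->]; exists (Ordinal (ltn_pmod k m0)) => //.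
  by rewrite /= (prim_expr_mod pz).
move=> [i _ ->]; exists (z ^+ i) => //; apply/imsetP.
by exists (widen_ord le i).
Qed.

Lemma coset_inj (F : fieldType) (m : nat) (z c : F) : m.-primitive_root z -> c != 0 ->
  injective (fun i : 'I_m => c * z ^+ (nat_of_ord i)).
Proof.
move=> pz c0 i j /(mulfI c0) /eqP; rewrite (eq_prim_root_expr pz) !modn_small //.
by move=> /eqP /val_inj.
Qed.

Definition Gb (F : fieldType) (b x : F) := if x != b then b - x else 1.

Lemma Gb_neq0 (F : fieldType) (b x : F) : Gb b x != 0.
Proof. by rewrite /Gb; case: ifP => [h|_]; [rewrite subr_eq0 eq_sym | rewrite oner_neq0]. Qed.

Lemma prod_Gb_out (F : finFieldType) (m : nat) (z c b : F) : m.-primitive_root z ->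
  (m <= #|F|)%N -> c != 0 -> b \notin coset_mul c (cyc z) ->
  \prod_(x in coset_mul c (cyc z)) Gb b x = b ^+ m - c ^+ m.
Proof.
move=> pz le c0 bn.
rewrite (coset_eq c pz le) in bn *.
rewrite big_imset /=; last by move=> i j _ _; apply: coset_inj.
rewrite -(prod_coset b pz c0); apply: eq_big => // i _.
rewrite /Gb; case: eqP => // e; case/negP: bn; rewrite -e; apply/imsetP; by exists i.
Qed.

Lemma prod_Gb_in (F : finFieldType) (m : nat) (z c b : F) : m.-primitive_root z ->
  (m <= #|F|)%N -> c != 0 -> b \in coset_mul c (cyc z) ->
  \prod_(x in coset_mul c (cyc z)) Gb b x = m%:R * b ^+ m.-1.
Proof.
move=> pz le c0 bn.
rewrite (coset_eq c pz le) in bn *.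
case/imsetP: bn => k _ ->.
rewrite big_imset /=; last by move=> i j _ _; apply: coset_inj.
rewrite -(prod_coset_own k pz c0).
rewrite (bigD1 k) //= {1}/Gb eqxx mul1r; apply: eq_big => // i ik.
rewrite /Gb; case: eqP => // e; move: ik; by rewrite (coset_inj pz c0 e) eqxx.
Qed.
Lemma coprime_divg (a b : nat) : (0 < a)%N -> coprime (a %/ gcdn a b) (b %/ gcdn a b).
Proof.
move=> a0; have g0 : (0 < gcdn a b)%N by rewrite gcdn_gt0 a0.
rewrite /coprime -(eqn_pmul2r g0) mul1n muln_gcdl !divnK ?dvdn_gcdl ?dvdn_gcdr //.
Qed.

Lemma thz (F : fieldType) (n : nat) (th : F) (w : int) : n.-primitive_root th ->
  (th ^ w == 1) = (n %| w)%Z.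
Proof.
move=> pr; case: w => m.
  by rewrite -exprnP -(prim_order_dvd pr).
by rewrite /= invr_eq1 -(prim_order_dvd pr).
Qed.

Lemma exprzn (F : unitRingType) (x : F) (z : int) (m : nat) : (x ^ z) ^+ m = (x ^+ m) ^ z.
Proof. by rewrite !exprnP exprzAC. Qed.

Lemma coset_memP (F : finFieldType) (b c y : F) : b \in coset_mul c (cyc y) ->
  exists k : nat, b = c * y ^+ k.
Proof. by case/imsetP => x /imsetP[k _ ->] ->; exists k. Qed.

Lemma sign_odd (F : fieldType) (s : F) (j : int) : s ^+ 2 = 1 -> s ^ (2 * j + 1) = s.
Proof.
move=> s2; have s0 : s != 0 by apply: contra_eq_neq s2 => ->; rewrite expr0n eq_sym oner_neq0.
rewrite expfzDr // -exprz_exp; have -> : s ^ 2 = 1 by exact: s2.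
by rewrite exp1rz mul1r expr1z.
Qed.

Lemma sign_even (F : fieldType) (s : F) (j : int) : s ^+ 2 = 1 -> s ^ (2 * j) = 1.
Proof. move=> s2; rewrite -exprz_exp; have -> : s ^ 2 = 1 by exact: s2.
by rewrite exp1rz. Qed.

Lemma expz_eq1 (F : fieldType) (a : F) (u v : int) : a != 0 -> a ^ u = a ^ v -> a ^ (u - v) = 1.
Proof. by move=> a0 e; rewrite expfzDr // -invr_expz e mulfV // expfz_neq0. Qed.
Lemma dvd_cancel (a b f : nat) (d : int) : (0 < a)%N -> (0 < f)%N ->
  (Posz (a * f)%N %| Posz (b * f)%N * d)%Z -> (Posz (a %/ gcdn a b)%N %| d)%Z.
Proof.
move=> a0 f0; set G := gcdn a b.
have G0 : (0 < G)%N by rewrite gcdn_gt0 a0.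
have ea : a = (a %/ G * G)%N by rewrite divnK // dvdn_gcdl.
have eb : b = (b %/ G * G)%N by rewrite divnK // dvdn_gcdr.
rewrite {1}ea {1}eb !PoszM.
rewrite (_ : (b %/ G)%:Z * G%:Z * f%:Z * d = ((b %/ G)%:Z * d) * G%:Z * f%:Z); last by ring.
rewrite dvdz_mul2r; last by rewrite lt0n_neq0 // -lt0n.
rewrite dvdz_mul2r; last by rewrite -lt0n.
rewrite Gauss_dvdzr //.
exact: coprime_divg.
Qed.

Lemma half_facts (n : nat) : (0 < n)%N -> n = (n./2 + n./2)%N -> (0 < n./2)%N /\ (n./2 < n)%N.
Proof. move=> n0 hn; set m := n./2 in hn *; lia. Qed.

Lemma m1_neq1 (F : fieldType) (n : nat) (th : F) : n.-primitive_root th -> ~~ odd n ->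
  (-1 : F) != 1.
Proof.
move=> pr ev; have n0 := prim_order_gt0 pr.
have hn : n = (n./2 + n./2)%N by move: (odd_double_half n); rewrite (negPf ev) add0n -addnn.
have [h0 hlt] := half_facts n0 hn.
have := prim_order_dvd pr (n./2); rewrite (th_half pr ev).
have : ~~ (n %| n./2)%N by apply/negP => /dvdn_leq => /(_ h0); rewrite leqNgt hlt.
by move=> /negPf -> e; apply/negP => /eqP e'; move: e; rewrite e' eqxx.
Qed.

Lemma disjP (T : finType) (A B : {set T}) :
  (forall x, x \in A -> x \in B -> False) -> [disjoint A & B].
Proof.
move=> h; rewrite disjoint_subset; apply/subsetP => x h1; rewrite inE.
by apply/negP => h2; apply: (h x h1 h2).
Qed.

Lemma prodGb_neq0 (F : finFieldType) (A : {set F}) (b : F) : \prod_(x in A) Gb b x != 0.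
Proof. by apply/prodf_neq0 => x _; apply: Gb_neq0. Qed.

Lemma LS_Gb (F : finFieldType) (S : {set F}) (b : F) : LS S b = \prod_(x in S) Gb b x.
Proof. by rewrite /LS big_mkcondr. Qed.

Lemma LS_neq0 (F : finFieldType) (S : {set F}) (b : F) : LS S b != 0.
Proof. by rewrite LS_Gb prodGb_neq0. Qed.

Lemma powpow1 (F : ringType) (s : F) (a b m : nat) : s ^+ m = 1 -> ((s ^+ a) ^+ b) ^+ m = 1.
Proof. by move=> h; rewrite exprAC (exprAC s) h !expr1n. Qed.

Lemma powz1 (F : unitRingType) (s : F) (z : int) (m : nat) : s ^+ m = 1 -> (s ^ z) ^+ m = 1.
Proof. by move=> h; rewrite exprzn h exp1rz. Qed.

Lemma uwM (F : fieldType) (s : F) (R k : nat) (z : int) : (s ^+ R) ^+ 2 = 1 ->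
  ((s ^+ 2) ^+ k * s ^ (2 * z + 1)) ^+ R = s ^+ R.
Proof.
move=> h; have e : ((s ^+ 2) ^+ k) ^+ R = ((s ^+ R) ^+ 2) ^+ k.
  by rewrite -!exprM; congr (s ^+ _); ring.
by rewrite exprMn exprzn sign_odd // e h expr1n mul1r.
Qed.

Lemma uwN (F : fieldType) (s : F) (R : nat) (z z' : int) : (s ^+ R) ^+ 2 = 1 ->
  (s ^ (2 * z + 1) * s ^ (2 * z' + 1)) ^+ R = 1.
Proof. by move=> h; rewrite exprMn !exprzn !sign_odd // -expr2. Qed.

Lemma solve_sign (F : ringType) (x a c : F) : a ^+ 2 = 1 -> x * a = c -> x = c * a.
Proof. by move=> h <-; rewrite -mulrA -expr2 h mulr1. Qed.

Lemma frz (F : fieldType) (r : nat) (rho : F) (z : int) : rho != 0 -> rho ^+ r = rho ->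
  (rho ^ z) ^+ r = rho ^ z.
Proof. by move=> _ h; rewrite exprzn h. Qed.

Unset Implicit Arguments. Set Strict Implicit.

Theorem mainTheorem7 (F : finFieldType) (r : nat) (theta : F)
  (e1 f1 e2 f2 l s t : nat) (i : 'I_s -> int) (j : 'I_t -> int) :
  (exists p k : nat, [/\ prime p, (0 < k)%N & r = p ^ k]%N) ->
  odd r ->
  #|F| = (r ^ 2)%N ->
  (#|F|.-1).-primitive_root theta ->
  (0 < e1)%N -> (0 < f1)%N -> (0 < e2)%N -> (0 < f2)%N ->
  #|F|.-1 = (e1 * f1)%N -> #|F|.-1 = (e2 * f2)%N ->
  (2 <= l)%N ->
  (e1 %% 2 ^ l.+1 = 2 ^ l)%N ->
  (2 ^ l %| e2)%N ->
  (2 * e2 %| e1 * (r + 1))%N ->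
  (e1 %| e2 * (r - 1))%N ->
  let A := cyc (theta ^+ e1) in
  let B := cyc (theta ^+ e2) in
  let beta := theta ^+ e2 in
  let gamma := theta ^+ (e1 %/ 2) in
  let D1 := (e1 %/ gcdn e1 e2)%N in
  let D2 := (e2 %/ gcdn e1 e2)%N in
  (1 <= s <= D1)%N -> (1 <= t <= D2)%N ->
  injective (fun mu => (i mu %% D1%:Z)%Z) ->
  injective (fun nu => (j nu %% D2%:Z)%Z) ->
  let M := \bigcup_(mu < s) coset_mul (beta ^ i mu) A in
  let N := \bigcup_(nu < t) coset_mul (gamma ^ (2 * j nu + 1)) B in
  let S := M :|: N in
  (forall b, b \in M ->
     qchar (LS S b) = (-1) ^+ (t * (e1 * (r + 1) %/ (2 * e2)) + t * ((r + 1) %/ 2))%N)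
  /\
  (forall b, b \in N ->
     qchar (LS S b) = (-1) ^+ ((t - 1) * ((r + 1) %/ 2))%N).
Proof.
move=> hr or cF pr e10 f10 e20 f20 hn1 hn2 l2 he1 he2 hd1 hd2 A B beta gamma D1 D2
  /andP[s1 sD1] /andP[t1 tD2] iinj jinj M N S.
have [p [k [pp k0 rpk]]] := hr.
have pch : p \in [pchar F] by apply: (@card_finPcharP F p (k * 2)); rewrite // cF rpk expnM.
have pchr : [pchar F].-nat r.
  by rewrite rpk pnatX; apply/orP; left; rewrite (eq_pnat _ (pcharf_eq pch)) pnat_id.
have r0 : (0 < r)%N by case: (r) or.
set n := #|F|.-1 in pr hn1 hn2.
have nr : n = (r ^ 2).-1 by rewrite /n cF.
set L := (2 ^ (l - 2))%N.
have L0 : (0 < L)%N by rewrite expn_gt0.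
have h2l : (2 ^ l = 4 * L)%N by rewrite /L -[4%N]/(2 ^ 2)%N -expnD subnKC.
set q1 := (e1 %/ 2 ^ l.+1)%N.
set o1 := (q1.*2.+1)%N.
have oo1 : odd o1 by rewrite /o1 /= odd_double.
have he1' : e1 = (4 * L * o1)%N.
  have := divn_eq e1 (2 ^ l.+1); rewrite -/q1 he1 expnS h2l => ->.
  rewrite /o1 mulnS -mul2n; ring.
set c2 := (e2 %/ 2 ^ l)%N.
have he2' : e2 = (4 * L * c2)%N by rewrite /c2 -h2l mulnC divnK.
set g1 := (e1 %/ 2)%N.
have hg1 : g1 = (2 * L * o1)%N.
  by rewrite /g1 he1' (_ : 4 * L * o1 = 2 * (2 * L * o1))%N ?mulKn //; ring.
have hnn : n = (4 * L * o1 * f1)%N by rewrite hn1 he1'.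
have ev : ~~ odd n by rewrite hnn -!mulnA oddM.
set h := n./2.
have hh : h = (2 * L * o1 * f1)%N by rewrite /h hnn -!mulnA -[4%N]/(2 * 2)%N -!mulnA mul2n doubleK.
set R2 := ((r + 1) %/ 2)%N.
have hR2 : (r + 1 = 2 * R2)%N.
  by rewrite /R2 mulnC divnK // dvdn2 addn1 /= or.
set E' := (e1 * (r + 1) %/ (2 * e2))%N.
have hE : (2 * e2 * E' = e1 * (r + 1))%N by rewrite mulnC divnK.
have c20 : (0 < c2)%N by move: e20; rewrite he2' !muln_gt0 => /andP[_].
have o10 : (0 < o1)%N by [].
have hcE : (c2 * E' = o1 * R2)%N.
  apply/eqP; rewrite -(eqn_pmul2l (_ : 0 < 8 * L)%N); last by rewrite muln_gt0 L0.
  apply/eqP; move: hE; rewrite he2' he1' hR2 => hE.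
  rewrite (_ : 8 * L * (c2 * E') = 2 * (4 * L * c2) * E')%N; last by ring.
  by rewrite hE; ring.
have [W hW] : exists W, (e2 * (r - 1) = W * e1)%N by apply/dvdnP.
have hof : (o1 * f1 = c2 * f2)%N.
  apply/eqP; rewrite -(eqn_pmul2l (_ : 0 < 4 * L)%N); last by rewrite muln_gt0 L0.
  by apply/eqP; rewrite !mulnA -he1' -he2' -hn1 -hn2.
have hN6 : (g1 * f2 * R2 = h * E')%N.
  apply/eqP; rewrite -(eqn_pmul2l c20); apply/eqP.
  rewrite hg1 hh.
  have -> : (c2 * (2 * L * o1 * f2 * R2) = 2 * L * o1 * R2 * (c2 * f2))%N by ring.
  have -> : (c2 * (2 * L * o1 * f1 * E') = 2 * L * o1 * f1 * (c2 * E'))%N by ring.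
  rewrite -hof hcE; ring.
have th0 : theta != 0.
  apply/negP => /eqP t0; move: (prim_expr_order pr); rewrite t0 expr0n.
  have -> : (n == 0%N) = false by apply/negbTE; rewrite -lt0n (prim_order_gt0 pr).
  by move/eqP; rewrite eq_sym oner_eq0.
have thn : theta ^+ n = 1 := prim_expr_order pr.
have thh : theta ^+ h = -1 := th_half pr ev.
have thX : forall X Y, X = (n * Y)%N -> theta ^+ X = 1.
  by move=> X Y ->; rewrite exprM thn expr1n.
have m1 : (-1 : F) != 1 := m1_neq1 pr ev.
set rho := theta ^+ (e2 * f1).
set sigma := theta ^+ (g1 * f2).
have Fef1 : (theta ^+ e1) ^+ f1 = 1 by rewrite -exprM -hn1.
have Fef2 : (theta ^+ e2) ^+ f2 = 1 by rewrite -exprM -hn2.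
have Fbf1 : beta ^+ f1 = rho by rewrite -exprM.
have Fe1f2 : (theta ^+ e1) ^+ f2 = sigma ^+ 2.
  by rewrite -!exprM; congr (theta ^+ _); rewrite he1' hg1; ring.
have Fgf2 : gamma ^+ f2 = sigma by rewrite -exprM.
have Fgf1 : gamma ^+ f1 = -1.
  by rewrite -exprM -thh; congr (theta ^+ _); rewrite -/g1 hg1 hh; ring.
have Fe1h : (theta ^+ e1) ^+ h = 1.
  by rewrite -exprM (thX _ (2 * L * o1)%N) // he1' hh hnn; ring.
have Fe2h : (theta ^+ e2) ^+ h = 1.
  by rewrite -exprM (thX _ (2 * L * c2)%N) // he2' hh hnn; ring.
have Fgh : gamma ^+ h = 1.
  by rewrite -exprM (thX _ (L * o1)%N) // -/g1 hg1 hh hnn; ring.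
have rho0 : rho != 0 by rewrite expf_neq0.
have Frho : rho ^+ r = rho.
  rewrite -exprM.
  have -> : (e2 * f1 * r = n * W + e2 * f1)%N.
    have e2r : (e2 * r = W * e1 + e2)%N.
      by rewrite -hW subn1 -mulnSr prednK.
    by rewrite hn1 mulnAC e2r; ring.
  by rewrite exprD exprM thn expr1n mul1r.
have Fsig : sigma ^+ r.+1 = 1.
  rewrite -exprM (thX _ E') // -[r.+1]addn1 hR2.
  rewrite (_ : g1 * f2 * (2 * R2) = 2 * (g1 * f2 * R2))%N; last by ring.
  by rewrite hN6 hh hnn; ring.
have FsgR : sigma ^+ R2 = (-1) ^+ E'.
  by rewrite -exprM hN6 exprM thh.
set sg := sigma ^+ R2.
have sg2 : sg ^+ 2 = 1 by rewrite /sg FsgR -exprM mulnC exprM sqrrN expr1n expr1n.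
have hR2' : ((r.+1)./2 = R2)%N by rewrite /R2 divn2 addn1.
have hhr : h = ((r ^ 2).-1)./2 by rewrite /h nr.
set P := (o1 * f1)%N.
have FbP : beta ^+ P = 1.
  by rewrite -exprM (thX _ c2) // he2' hnn /P; ring.
have Fe1P : (theta ^+ e1) ^+ P = 1.
  by rewrite -exprM (thX _ o1) // he1' hnn /P; ring.
have FgP : gamma ^+ P = -1.
  rewrite -exprM (_ : (e1 %/ 2 * P = h * o1)%N); last by rewrite -/g1 hg1 hh /P; ring.
  by rewrite exprM thh -signr_odd oo1 expr1.
have prA : f1.-primitive_root (theta ^+ e1).
  have := exp_prim_root pr e1; rewrite (gcdn_idPl _); last by rewrite hn1 dvdn_mulr.
  by rewrite hn1 mulKn.
have prB : f2.-primitive_root (theta ^+ e2).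
  have := exp_prim_root pr e2; rewrite (gcdn_idPl _); last by rewrite hn2 dvdn_mulr.
  by rewrite hn2 mulKn.
have n0 : (0 < n)%N := prim_order_gt0 pr.
have cFn : #|F| = n.+1 by rewrite /n prednK // cF expn_gt0 r0.
have f1F : (f1 <= #|F|)%N by rewrite cFn hn1; apply: leqW; rewrite leq_pmull.
have f2F : (f2 <= #|F|)%N by rewrite cFn hn2; apply: leqW; rewrite leq_pmull.
set C := fun mu => coset_mul (beta ^ i mu) A.
set Nc := fun nu => coset_mul (gamma ^ (2 * j nu + 1)) B.
have powM : forall (z : int) (k m : nat),
    (beta ^ z * (theta ^+ e1) ^+ k) ^+ m = (beta ^+ m) ^ z * ((theta ^+ e1) ^+ m) ^+ k.
  by move=> z k0' m; rewrite exprMn exprzn -!exprM mulnA mulnAC.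
have powN : forall (z : int) (k m : nat),
    (gamma ^ z * (theta ^+ e2) ^+ k) ^+ m = (gamma ^+ m) ^ z * ((theta ^+ e2) ^+ m) ^+ k.
  by move=> z k0' m; rewrite exprMn exprzn -!exprM mulnA mulnAC.
have Mf1 : forall mu b, b \in C mu -> b ^+ f1 = rho ^ i mu.
  by move=> mu b /coset_memP[k' ->]; rewrite powM Fbf1 Fef1 expr1n mulr1.
have Nf2 : forall nu b, b \in Nc nu -> b ^+ f2 = sigma ^ (2 * j nu + 1).
  by move=> nu b /coset_memP[k' ->]; rewrite powN Fgf2 Fef2 expr1n mulr1.
have DM : forall mu mu', mu != mu' -> [disjoint C mu & C mu'].
  move=> mu mu' ne; apply: disjP => x h1 h2.
  have e : rho ^ i mu = rho ^ i mu' by rewrite -(Mf1 _ _ h1) -(Mf1 _ _ h2).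
  have := expz_eq1 rho0 e; rewrite /rho exprnP exprz_exp => /eqP; rewrite (thz _ pr).
  rewrite hn1 => /dvd_cancel => /(_ e10 f10) hd.
  move/negP: ne; apply; apply/eqP; apply: iinj => /=.
  by apply/eqP; rewrite eqz_mod_dvd.
have DN : forall nu nu', nu != nu' -> [disjoint Nc nu & Nc nu'].
  move=> nu nu' ne; apply: disjP => x h1 h2.
  have e : sigma ^ (2 * j nu + 1) = sigma ^ (2 * j nu' + 1).
    by rewrite -(Nf2 _ _ h1) -(Nf2 _ _ h2).
  have sig0 : sigma != 0 by rewrite expf_neq0.
  have := expz_eq1 sig0 e; rewrite /sigma exprnP exprz_exp => /eqP; rewrite (thz _ pr).
  rewrite (_ : (g1 * f2)%:Z * (2 * j nu + 1 - (2 * j nu' + 1)) = (e1 * f2)%:Z * (j nu - j nu')); last first.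
    rewrite he1' hg1 !PoszM; ring.
  rewrite hn2 => /dvd_cancel => /(_ e20 f20); rewrite gcdnC => hd.
  move/negP: ne; apply; apply/eqP; apply: jinj => /=.
  by apply/eqP; rewrite eqz_mod_dvd.
have DMN : [disjoint M & N].
  apply: disjP => x /bigcupP[mu _ h1] /bigcupP[nu _ h2].
  have e1P : x ^+ P = 1.
    by case/coset_memP: h1 => k' ->; rewrite powM FbP Fe1P exp1rz expr1n mulr1.
  have e2P : x ^+ P = -1.
    case/coset_memP: h2 => k' ->; rewrite powN FgP.
    rewrite (_ : (theta ^+ e2) ^+ P = 1) ?expr1n ?mulr1; last by rewrite -FbP.
    by rewrite sign_odd // sqrrN expr1n.
  by move: m1; rewrite -e2P e1P eqxx.
have natnz : forall m, (m %| n)%N -> (m%:R : F) != 0.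
  move=> m hm; rewrite -(dvdn_pcharf pch); apply/negP => pm.
  have pn : (p %| n)%N := dvdn_trans pm hm.
  have pr2 : (p %| n + 1)%N.
    by rewrite addn1 -cFn cF rpk -expnM dvdn_exp // muln_gt0 k0.
  move: pr2; rewrite (dvdn_addr _ pn) dvdn1 => /eqP p1.
  by move: (prime_gt1 pp); rewrite p1.
have frn : forall m, (m %| n)%N -> ((m%:R : F) ^+ h = 1).
  by move=> m hm; rewrite hhr; apply: fr_sq => //; [apply: natnz | apply: frobn].
have f1n : (f1 %| n)%N by rewrite hn1 dvdn_mull.
have f2n : (f2 %| n)%N by rewrite hn2 dvdn_mull.
have beta0 : forall z : int, beta ^ z != 0 by move=> z; rewrite expfz_neq0 // expf_neq0.
have gamma0 : forall z : int, gamma ^ z != 0 by move=> z; rewrite expfz_neq0 // expf_neq0.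
have LSdec : forall b, LS S b = (\prod_(mu < s) \prod_(x in C mu) Gb b x) *
                               (\prod_(nu < t) \prod_(x in Nc nu) Gb b x).
  move=> b; rewrite LS_Gb.
  rewrite (_ : \prod_(x in S) Gb b x = \prod_(x in [predU M & N]) Gb b x); last first.
    by apply: eq_bigl => x; rewrite /S inE.
  rewrite bigU //.
  rewrite /M /N !partition_disjoint_bigcup //.
have NM : forall b mu, b \in N -> b \notin C mu.
  move=> b mu bN; apply/negP => bC.
  have bM : b \in M by apply/bigcupP; exists mu.
  by move: bN; rewrite (disjointFr DMN bM).
have MN : forall b nu, b \in M -> b \notin Nc nu.
  move=> b nu bM; apply/negP => bN; move: (disjointFr DMN bM).
  by rewrite (_ : b \in N) //; apply/bigcupP; exists nu.
have sgE : sg = (-1) ^+ E' by rewrite /sg FsgR.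
have m12 : ((-1 : F) ^+ E') ^+ 2 = 1 by rewrite -exprM mulnC exprM sqrrN expr1n expr1n.
split.
  move=> b bM; apply: (qchar_sign pr ev (LS_neq0 S b)).
  move: (bM) => /bigcupP[mu _ bC].
  have [k' eb] := coset_memP bC.
  have bh : b ^+ h = 1 by rewrite eb powM Fe2h Fe1h exp1rz expr1n mulr1.
  have bf1 : b ^+ f1 = rho ^ i mu := Mf1 _ _ bC.
  have bf2 : b ^+ f2 = (sigma ^+ 2) ^+ k' by rewrite eb powM Fef2 Fe1f2 exp1rz mul1r.
  have qM : forall mu', (\prod_(x in C mu') Gb b x) ^+ h = 1.
    move=> mu'; case: (eqVneq mu' mu) => [-> | ne].
      rewrite (prod_Gb_in prA f1F (beta0 _) bC) exprMn frn //.
      by rewrite -exprM mulnC exprM bh expr1n mulr1.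
    have bC' : b \notin C mu' by rewrite (disjointFr (DM mu mu' (_ : mu != mu')) bC) // eq_sym.
    have nz := prodGb_neq0 (C mu') b.
    rewrite (prod_Gb_out prA f1F (beta0 _) bC') in nz *.
    rewrite bf1 exprzn Fbf1 in nz *.
    rewrite hhr; apply: fr_sq => //.
    by rewrite frobB // !exprzn Frho.
  have qN : forall nu, (\prod_(x in Nc nu) Gb b x) ^+ h = (-1) ^+ R2 * (-1) ^+ E'.
    move=> nu; have bN := MN b nu bM.
    have nz := prodGb_neq0 (Nc nu) b.
    rewrite (prod_Gb_out prB f2F (gamma0 _) bN) in nz *.
    rewrite bf2 exprzn Fgf2 in nz *.
    rewrite subr_eq0 in nz.
    have := circ or pchr (powpow1 2 k' Fsig) (powz1 (2 * j nu + 1) Fsig) nz.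
    rewrite -hhr hR2' uwM -/sg ?sg2 // sgE.
    exact: solve_sign.
  rewrite LSdec exprMn -!prodrXl big1 ?mul1r; last by move=> mu' _; exact: qM.
  rewrite (eq_bigr (fun _ => (-1) ^+ R2 * (-1) ^+ E')); last by move=> nu _; exact: qN.
  rewrite prodr_const card_ord -exprD -exprM; congr (_ ^+ _); ring.
move=> b bN; apply: (qchar_sign pr ev (LS_neq0 S b)).
move: (bN) => /bigcupP[nu _ bC].
have [k' eb] := coset_memP bC.
have bh : b ^+ h = 1 by rewrite eb powN Fgh Fe2h exp1rz expr1n mulr1.
have bf2 : b ^+ f2 = sigma ^ (2 * j nu + 1) := Nf2 _ _ bC.
have m1s : ((-1 : F) ^+ 2) = 1 by rewrite sqrrN expr1n.
have bf1 : b ^+ f1 = - rho ^+ k'.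
  by rewrite eb powN Fgf1 sign_odd // (_ : (theta ^+ e2) ^+ f1 = rho) ?mulN1r // -exprM.
have qM : forall mu, (\prod_(x in C mu) Gb b x) ^+ h = 1.
  move=> mu; have bC' := NM b mu bN.
  have nz := prodGb_neq0 (C mu) b.
  rewrite (prod_Gb_out prA f1F (beta0 _) bC') in nz *.
  rewrite bf1 exprzn Fbf1 in nz *.
  rewrite hhr; apply: fr_sq => //.
  by rewrite frobB // exprNn_pchar // exprzn Frho exprAC Frho.
have qN : forall nu', nu' != nu -> (\prod_(x in Nc nu') Gb b x) ^+ h = (-1) ^+ R2.
  move=> nu' ne.
  have bN' : b \notin Nc nu' by rewrite (disjointFr (DN nu nu' (_ : nu != nu')) bC) // eq_sym.
  have nz := prodGb_neq0 (Nc nu') b.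
  rewrite (prod_Gb_out prB f2F (gamma0 _) bN') in nz *.
  rewrite bf2 exprzn Fgf2 in nz *.
  rewrite subr_eq0 in nz.
  have := circ or pchr (powz1 (2 * j nu + 1) Fsig) (powz1 (2 * j nu' + 1) Fsig) nz.
  by rewrite -hhr hR2' uwN ?mulr1 // -/sg sg2.
have qNo : (\prod_(x in Nc nu) Gb b x) ^+ h = 1.
  rewrite (prod_Gb_in prB f2F (gamma0 _) bC) exprMn frn //.
  by rewrite -exprM mulnC exprM bh expr1n mulr1.
rewrite LSdec exprMn -!prodrXl big1 ?mul1r; last by move=> mu _; exact: qM.
rewrite (bigD1 nu) //= qNo mul1r.
rewrite (eq_bigr (fun _ => (-1) ^+ R2)); last by move=> nu' /qN.
rewrite prodr_const cardC1 card_ord -exprM mulnC subn1 //.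
Qed.
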